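(* Consider a Fragile multi-CPR Game with $n\ge1$ players and $m\ge1$ CPRs satisfying the Assumption below, with constraint policies $\vartheta_i$ as below. Then there exists at most one Generalized Nash equilibrium $\mathbf{x}=(\mathbf{x}_1,\dots,\mathbf{x}_n)$ for which $\mathbf{x}_i$ is of Type I for all $i\in[n]$.
   Context: Let $[k]=\{1,\dots,k\}$, $C_m=\{(x_1,\dots,x_m)\in[0,1]^m:\sum_j x_j\le1\}$, $\mathcal{C}_n=\prod_{i\in[n]}C_m$, $\mathcal{C}_{-i}=\prod_{[n]\setminus\{i\}}C_m$. A profile is $\mathbf{x}=(\mathbf{x}_1,\dots,\mathbf{x}_n)\in\mathcal{C}_n$, $\mathbf{x}_i=(x_{i1},\dots,x_{im})$; write $\mathbf{x}=(\mathbf{x}_i,\mathbf{x}_{-i})$. Put $\mathbf{x}_T^{(j)}=\sum_i x_{ij}$, $\mathbf{x}_T^{j|i}=\sum_{\ell\ne i}x_{\ell j}$. Each CPR $j$ has a return rate $\mathcal{R}_j(t)>1$ and failure probability $p_j(t)\in[0,1]$; each player $i$ has parameters $a_i,k_i$. Effective rate: $\mathcal{F}_{ij}(t)=(\mathcal{R}_j(t)-1)^{a_i}(1-p_j(t))-k_ip_j(t)$; utility $\mathcal{V}_i(\mathbf{x}_i;\mathbf{x}_{-i})=\sum_j x_{ij}^{a_i}\mathcal{F}_{ij}(\mathbf{x}_T^{(j)})$. Assumption: (1) $p_j(0)=0$, $p_j(t)=1$ for $t\ge1$; (2) $a_i\in(0,1]$, $k_i>0$; (3) each $\mathcal{F}_{ij}$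 (continuous on $[0,1]$) has strictly negative first and second derivatives on $(0,1)$. Let $\omega_{ij}\in(0,1)$ be the unique zero of $\mathcal{F}_{ij}$ in $(0,1)$. Active CPRs: $A(\mathbf{x}_{-i})=\{j:\mathbf{x}_T^{j|i}<\omega_{ij}\}$. Constraint policy: $\vartheta_i(\mathbf{x}_{-i})=C_m\cap\big(\prod_{j\in A(\mathbf{x}_{-i})}[0,\omega_{ij}-\mathbf{x}_T^{j|i}]\times\prod_{j\notin A(\mathbf{x}_{-i})}\{0\}\big)$. A Generalized Nash equilibrium (GNE) is $\mathbf{x}\in\mathcal{C}_n$ with, for all $i$, $\mathbf{x}_i\in\vartheta_i(\mathbf{x}_{-i})$ and $\mathcal{V}_i(\mathbf{x}_i;\mathbf{x}_{-i})\ge\mathcal{V}_i(\mathbf{y};\mathbf{x}_{-i})$ for all $\mathbf{y}\in\vartheta_i(\mathbf{x}_{-i})$. Let $\psi_{ij}(x;s)=x\,\mathcal{F}_{ij}'(x+s)+a_i\mathcal{F}_{ij}(x+s)$. For a GNE $\mathbf{x}$ and $i\in[n]$, let $J_{\mathbf{x}_{-i}}=\{j\in A(\mathbf{x}_{-i}):x_{ij}\ne0\}$. Then $\mathbf{x}_i$ is of Type I if $\sum_{j\in J_{\mathbf{x}_{-i}}}x_{ij}<1$ and $\psi_{ij}(x_{ij};\mathbf{x}_T^{j|i})=0$ for all $j\in J_{\mathbf{x}_{-i}}$; it is of Type II if $\sum_{j\in J_{\mathbf{x}_{-i}}}x_{ij}=1$ and there is $\kappa_0\ge0$ with $x_{ij}^{a_i-1}\psi_{ij}(x_{ij};\mathbf{x}_T^{j|i})=\kappa_0$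 for all $j\in J_{\mathbf{x}_{-i}}$. *)

(* Defs.v *)
From Stdlib Require Import Reals Lra.
From Coquelicot Require Import Coquelicot.
Open Scope R_scope.

Fixpoint sumR (n : nat) (f : nat -> R) : R :=
  match n with O => 0 | S n' => sumR n' f + f n' end.

Definition rpow (x a : R) : R := if Rle_dec x 0 then 0 else Rpower x a.

Definition Feff (Rr p : nat -> R -> R) (a k : nat -> R) (i j : nat) (t : R) : R :=
  Rpower (Rr j t - 1) (a i) * (1 - p j t) - k i * p j t.

Definition psi (Rr p : nat -> R -> R) (a k : nat -> R) (i j : nat) (x s : R) : R :=
  x * Derive (Feff Rr p a k i j) (x + s) + a i * Feff Rr p a k i j (x + s).

Definition in_C (m : nat) (v : nat -> R) : Prop :=
  (forall j, (j < m)%nat -> 0 <= v j <= 1) /\ sumR m v <= 1.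

Definition in_Cn (n m : nat) (x : nat -> nat -> R) : Prop :=
  forall i, (i < n)%nat -> in_C m (x i).

Definition others (n : nat) (x : nat -> nat -> R) (i j : nat) : R :=
  sumR n (fun l => if Nat.eq_dec l i then 0 else x l j).

Definition active (n : nat) (omega : nat -> nat -> R) (x : nat -> nat -> R) (i j : nat) : Prop :=
  others n x i j < omega i j.

Definition vartheta (n m : nat) (omega : nat -> nat -> R) (x : nat -> nat -> R)
    (i : nat) (y : nat -> R) : Prop :=
  in_C m y /\
  forall j, (j < m)%nat ->
    (active n omega x i j -> 0 <= y j <= omega i j - others n x i j) /\
    (~ active n omega x i j -> y j = 0).

Definition utility (n m : nat) (Rr p : nat -> R -> R) (a k : nat -> R)
    (x : nat -> nat -> R) (i : nat) (y : nat -> R) : R :=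
  sumR m (fun j => rpow (y j) (a i) * Feff Rr p a k i j (y j + others n x i j)).

Definition is_GNE (n m : nat) (Rr p : nat -> R -> R) (a k : nat -> R)
    (omega : nat -> nat -> R) (x : nat -> nat -> R) : Prop :=
  in_Cn n m x /\
  forall i, (i < n)%nat ->
    vartheta n m omega x i (x i) /\
    forall y, vartheta n m omega x i y ->
      utility n m Rr p a k x i y <= utility n m Rr p a k x i (x i).

Definition typeI (n m : nat) (Rr p : nat -> R -> R) (a k : nat -> R)
    (omega : nat -> nat -> R) (x : nat -> nat -> R) (i : nat) : Prop :=
  sumR m (fun j => if Rlt_dec (others n x i j) (omega i j)
                   then (if Req_EM_T (x i j) 0 then 0 else x i j) else 0) < 1 /\
  forall j, (j < m)%nat -> active n omega x i j -> x i j <> 0 ->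
    psi Rr p a k i j (x i j) (others n x i j) = 0.

Definition game_assumption (n m : nat) (Rr p : nat -> R -> R) (a k : nat -> R)
    (omega : nat -> nat -> R) : Prop :=
  (forall j t, (j < m)%nat -> 0 <= t -> 1 < Rr j t) /\
  (forall j t, (j < m)%nat -> 0 <= t -> 0 <= p j t <= 1) /\
  (forall j, (j < m)%nat -> p j 0 = 0) /\
  (forall j t, (j < m)%nat -> 1 <= t -> p j t = 1) /\
  (forall i, (i < n)%nat -> 0 < a i <= 1 /\ 0 < k i) /\
  (forall i j, (i < n)%nat -> (j < m)%nat ->
     (forall t, 0 <= t <= 1 -> forall eps, 0 < eps -> exists delta, 0 < delta /\
        forall u, 0 <= u <= 1 -> Rabs (u - t) < delta ->
          Rabs (Feff Rr p a k i j u - Feff Rr p a k i j t) < eps) /\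
     (forall t, 0 < t < 1 ->
        ex_derive (Feff Rr p a k i j) t /\ Derive (Feff Rr p a k i j) t < 0 /\
        ex_derive (Derive (Feff Rr p a k i j)) t /\
        Derive (Derive (Feff Rr p a k i j)) t < 0)) /\
  (forall i j, (i < n)%nat -> (j < m)%nat ->
     0 < omega i j < 1 /\ Feff Rr p a k i j (omega i j) = 0).

(* Main.v *)
Require Import Defs.
From Stdlib Require Import Reals Lra Lia.
From Coquelicot Require Import Coquelicot.
Open Scope R_scope.

Lemma sumR_ext n f g : (forall l, (l < n)%nat -> f l = g l) -> sumR n f = sumR n g.
Proof.
  induction n; simpl; intros H; [reflexivity|].
  rewrite IHn by (intros; apply H; lia). rewrite H by lia. reflexivity.
Qed.

Lemma sumR_le n f g : (forall l, (l < n)%nat -> f l <= g l) -> sumR n f <= sumR n g.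
Proof.
  induction n; simpl; intros H; [lra|].
  assert (sumR n f <= sumR n g) by (apply IHn; intros; apply H; lia).
  assert (f n <= g n) by (apply H; lia). lra.
Qed.

Lemma sumR_update n f j v : (j < n)%nat ->
  sumR n (fun l => if Nat.eq_dec l j then v else f l) = sumR n f - f j + v.
Proof.
  induction n; simpl; intros Hj; [lia|].
  destruct (Nat.eq_dec n j) as [->|Hne].
  - rewrite (sumR_ext j _ f). lra. intros l Hl. destruct (Nat.eq_dec l j); [lia|auto].
  - rewrite IHn by lia. lra.
Qed.

Lemma others_eq n x i j : (i < n)%nat ->
  others n x i j = sumR n (fun l => x l j) - x i j.
Proof.
  intros Hi. unfold others. rewrite (sumR_update n (fun l => x l j) i 0 Hi). lra.
Qed.

Lemma decr (f : R -> R) : (forall t, 0 < t < 1 -> ex_derive f t /\ Derive f t < 0) ->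
  forall u v, 0 < u -> u < v -> v < 1 -> f v < f u.
Proof.
  intros H u v H1 H2 H3.
  destruct (MVT_gen f u v (Derive f)) as [c [Hc Heq]].
  - intros t Ht. rewrite Rmin_left in Ht by lra. rewrite Rmax_right in Ht by lra.
    apply Derive_correct. apply H. lra.
  - intros t Ht. rewrite Rmin_left in Ht by lra. rewrite Rmax_right in Ht by lra.
    apply continuity_pt_filterlim. apply (ex_derive_continuous (K:=R_AbsRing) (V:=R_NormedModule)). apply H. lra.
  - rewrite Rmin_left in Hc by lra. rewrite Rmax_right in Hc by lra.
    assert (Derive f c < 0) by (apply H; lra).
    assert (Derive f c * (v - u) < 0). { apply Rmult_neg_pos; lra. }
    lra.
Qed.

Lemma rpow_pos e a : 0 < e -> 0 < rpow e a.
Proof. intros. unfold rpow. destruct (Rle_dec e 0); [lra|]. unfold Rpower. apply exp_pos. Qed.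

Lemma rpow_0 a : rpow 0 a = 0.
Proof. unfold rpow. destruct (Rle_dec 0 0); lra. Qed.

Lemma sumR_nonneg n f : (forall l, (l < n)%nat -> 0 <= f l) -> 0 <= sumR n f.
Proof.
  intros H. assert (H0 : forall n, sumR n (fun _ => 0) = 0) by (induction n0; simpl; [|rewrite IHn0]; lra).
  rewrite <- (H0 n). apply sumR_le. auto.
Qed.

Section Key.
Variables (n m : nat) (Rr p : nat -> R -> R) (a k : nat -> R) (omega : nat -> nat -> R).
Hypothesis GA : game_assumption n m Rr p a k omega.

Lemma F_decr i j : (i < n)%nat -> (j < m)%nat ->
  forall u v, 0 < u -> u < v -> v < 1 -> Feff Rr p a k i j v < Feff Rr p a k i j u.
Proof.
  intros Hi Hj. destruct GA as [_ [_ [_ [_ [_ [HF _]]]]]].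
  apply decr. intros t Ht. destruct (HF i j Hi Hj) as [_ H]. destruct (H t Ht) as [? [? _]]. auto.
Qed.

Lemma DF_decr i j : (i < n)%nat -> (j < m)%nat ->
  forall u v, 0 < u -> u < v -> v < 1 ->
  Derive (Feff Rr p a k i j) v < Derive (Feff Rr p a k i j) u.
Proof.
  intros Hi Hj. destruct GA as [_ [_ [_ [_ [_ [HF _]]]]]].
  apply decr. intros t Ht. destruct (HF i j Hi Hj) as [_ H]. destruct (H t Ht) as [? [? [? ?]]]. auto.
Qed.

Lemma DF_neg i j : (i < n)%nat -> (j < m)%nat -> forall t, 0 < t < 1 ->
  Derive (Feff Rr p a k i j) t < 0.
Proof.
  intros Hi Hj t Ht. destruct GA as [_ [_ [_ [_ [_ [HF _]]]]]].
  destruct (HF i j Hi Hj) as [_ H]. destruct (H t Ht) as [? [? _]]. auto.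
Qed.

Variable x : nat -> nat -> R.
Hypothesis Hx : is_GNE n m Rr p a k omega x.
Hypothesis HxI : forall i, (i < n)%nat -> typeI n m Rr p a k omega x i.

Lemma x_bounds i j : (i < n)%nat -> (j < m)%nat -> 0 <= x i j <= 1.
Proof. intros Hi Hj. destruct Hx as [HC _]. destruct (HC i Hi) as [H _]. auto. Qed.

Lemma T_ge j : (j < m)%nat -> 0 <= sumR n (fun l => x l j).
Proof. intros Hj. apply sumR_nonneg. intros l Hl. apply x_bounds; auto. Qed.

Lemma others_ge i j : (i < n)%nat -> (j < m)%nat -> 0 <= others n x i j.
Proof. intros Hi Hj. unfold others. apply sumR_nonneg. intros l Hl.
  destruct (Nat.eq_dec l i); [lra|apply x_bounds; auto]. Qed.

Lemma sum_lt1 i : (i < n)%nat -> sumR m (x i) < 1.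
Proof.
  intros Hi. destruct (HxI i Hi) as [Hs _]. eapply Rle_lt_trans; [|exact Hs].
  right. apply sumR_ext. intros l Hl.
  destruct (Rlt_dec (others n x i l) (omega i l)).
  - destruct (Req_EM_T (x i l) 0); auto.
  - destruct Hx as [_ H]. destruct (H i Hi) as [[_ Hv] _]. destruct (Hv l Hl) as [_ H2].
    apply H2. exact n0.
Qed.

Lemma x_nonzero i j : (i < n)%nat -> (j < m)%nat -> active n omega x i j -> x i j <> 0.
Proof.
  intros Hi Hj Hact H0.
  destruct GA as [_ [_ [_ [_ [Ha [_ Hom]]]]]].
  destruct (Hom i j Hi Hj) as [[om0 om1] Fom].
  set (s := others n x i j) in *. unfold active in Hact. fold s in Hact.
  assert (Hs0 : 0 <= s) by (apply others_ge; auto).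
  set (S := sumR m (x i)).
  assert (HS : S < 1) by (apply sum_lt1; auto).
  set (eps := Rmin ((1 - S)/2) ((omega i j - s)/2)).
  assert (He1 : eps <= (1 - S)/2) by apply Rmin_l.
  assert (He2 : eps <= (omega i j - s)/2) by apply Rmin_r.
  assert (He0 : 0 < eps) by (apply Rmin_pos; lra).
  set (yv := fun l => if Nat.eq_dec l j then eps else x i l).
  destruct Hx as [HC Hg]. destruct (Hg i Hi) as [[HinC Hv] Hopt].
  assert (Hvy : vartheta n m omega x i yv).
  { split; [split|].
    - intros l Hl. unfold yv. destruct (Nat.eq_dec l j); [lra|]. apply HinC; auto.
    - unfold yv. rewrite (sumR_update m (x i) j eps Hj). fold S. lra.
    - intros l Hl. unfold yv. destruct (Nat.eq_dec l j) as [->|].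
      + split; intros; [fold s; lra|exfalso; auto].
      + apply Hv; auto. }
  specialize (Hopt yv Hvy). unfold utility in Hopt.
  set (f := fun l => rpow (x i l) (a i) * Feff Rr p a k i l (x i l + others n x i l)) in Hopt.
  rewrite (sumR_ext m _ (fun l => if Nat.eq_dec l j then
       rpow eps (a i) * Feff Rr p a k i j (eps + s) else f l)) in Hopt.
  2:{ intros l Hl. unfold yv, f. destruct (Nat.eq_dec l j) as [->|]; reflexivity. }
  rewrite (sumR_update m f j _ Hj) in Hopt.
  assert (f j = 0) by (unfold f; rewrite H0, rpow_0; ring).
  assert (0 < rpow eps (a i)) by (apply rpow_pos; auto).
  assert (Feff Rr p a k i j (omega i j) < Feff Rr p a k i j (eps + s))
    by (apply F_decr; auto; lra).
  assert (0 < rpow eps (a i) * Feff Rr p a k i j (eps + s)) by (apply Rmult_lt_0_compat; lra).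
  lra.
Qed.

Lemma keyA i j : (i < n)%nat -> (j < m)%nat ->
  sumR n (fun l => x l j) < omega i j ->
  0 < x i j /\ 0 < sumR n (fun l => x l j) /\
  x i j * Derive (Feff Rr p a k i j) (sumR n (fun l => x l j))
    + a i * Feff Rr p a k i j (sumR n (fun l => x l j)) = 0.
Proof.
  intros Hi Hj HT.
  assert (Hb := x_bounds i j Hi Hj).
  assert (Ho := others_eq n x i j Hi).
  assert (Hact : active n omega x i j) by (unfold active; lra).
  assert (Hnz := x_nonzero i j Hi Hj Hact).
  destruct (HxI i Hi) as [_ Hpsi]. specialize (Hpsi j Hj Hact Hnz). unfold psi in Hpsi.
  replace (x i j + others n x i j) with (sumR n (fun l => x l j)) in Hpsi by lra.
  assert (0 < x i j) by lra. split; [auto|split; [|auto]].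
  assert (0 <= others n x i j) by (apply others_ge; auto). lra.
Qed.

Lemma keyB i j : (i < n)%nat -> (j < m)%nat ->
  omega i j <= sumR n (fun l => x l j) -> x i j = 0.
Proof.
  intros Hi Hj HT.
  destruct (Rlt_dec (others n x i j) (omega i j)) as [Hact|Hna].
  - destruct (Req_EM_T (x i j) 0) as [|Hnz]; auto. exfalso.
    assert (Hb := x_bounds i j Hi Hj).
    assert (Ho := others_eq n x i j Hi).
    destruct Hx as [_ Hg]. destruct (Hg i Hi) as [[_ Hv] _].
    destruct (Hv j Hj) as [Hv1 _]. specialize (Hv1 Hact).
    destruct GA as [_ [_ [_ [_ [Ha [_ Hom]]]]]].
    destruct (Hom i j Hi Hj) as [[om0 om1] Fom].
    destruct (HxI i Hi) as [_ Hpsi]. specialize (Hpsi j Hj Hact Hnz). unfold psi in Hpsi.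
    replace (x i j + others n x i j) with (omega i j) in Hpsi by lra.
    rewrite Fom in Hpsi.
    assert (Derive (Feff Rr p a k i j) (omega i j) < 0) by (apply DF_neg; auto).
    assert (0 < x i j) by lra.
    assert (x i j * Derive (Feff Rr p a k i j) (omega i j) < 0) by (apply Rmult_pos_neg; lra).
    lra.
  - destruct Hx as [_ Hg]. destruct (Hg i Hi) as [[_ Hv] _].
    destruct (Hv j Hj) as [_ Hv2]. apply Hv2. exact Hna.
Qed.

End Key.

Lemma compare n m Rr p a k omega x y j :
  game_assumption n m Rr p a k omega ->
  is_GNE n m Rr p a k omega x ->
  (forall i, (i < n)%nat -> typeI n m Rr p a k omega x i) ->
  is_GNE n m Rr p a k omega y ->
  (forall i, (i < n)%nat -> typeI n m Rr p a k omega y i) ->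
  (j < m)%nat ->
  ~ (sumR n (fun l => x l j) < sumR n (fun l => y l j)).
Proof.
  intros GA Hx HxI Hy HyI Hj Hlt.
  assert (sumR n (fun l => y l j) <= sumR n (fun l => x l j)); [|lra].
  apply sumR_le. intros l Hl.
  set (Tx := sumR n (fun l => x l j)) in *.
  set (Ty := sumR n (fun l => y l j)) in *.
  destruct (Rlt_dec Ty (omega l j)) as [HT|HT].
  - destruct (keyA _ _ _ _ _ _ _ GA y Hy HyI l j Hl Hj HT) as [y0 [Ty0 Ey]].
    destruct (keyA _ _ _ _ _ _ _ GA x Hx HxI l j Hl Hj ltac:(fold Tx; lra)) as [x0 [Tx0 Ex]].
    fold Tx in Ex, Tx0. fold Ty in Ey, Ty0.
    pose proof GA as [_ [_ [_ [_ [Ha [_ Hom]]]]]].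
    destruct (Hom l j Hl Hj) as [[om0 om1] Fom].
    destruct (Ha l Hl) as [[a0 _] _].
    assert (F1 := F_decr _ _ _ _ _ _ _ GA l j Hl Hj Tx Ty Tx0 Hlt ltac:(lra)).
    assert (F2 := F_decr _ _ _ _ _ _ _ GA l j Hl Hj Ty (omega l j) Ty0 HT om1).
    assert (D1 := DF_decr _ _ _ _ _ _ _ GA l j Hl Hj Tx Ty Tx0 Hlt ltac:(lra)).
    assert (D3 := DF_neg _ _ _ _ _ _ _ GA l j Hl Hj Tx ltac:(lra)).
    assert (D2 := DF_neg _ _ _ _ _ _ _ GA l j Hl Hj Ty ltac:(lra)).
    rewrite Fom in F2.
    set (FX := Feff Rr p a k l j Tx) in *.
    set (FY := Feff Rr p a k l j Ty) in *.
    set (DX := Derive (Feff Rr p a k l j) Tx) in *.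
    set (DY := Derive (Feff Rr p a k l j) Ty) in *.
    destruct (Rle_dec (y l j) (x l j)) as [|Hc]; auto. exfalso.
    assert (x l j * (- DX) <= y l j * (- DX)) by (apply Rmult_le_compat_r; lra).
    assert (y l j * (- DX) < y l j * (- DY)) by (apply Rmult_lt_compat_l; lra).
    assert (a l * FY < a l * FX) by (apply Rmult_lt_compat_l; lra).
    lra.
  - assert (HT' : omega l j <= Ty) by (apply Rnot_lt_le; exact HT).
    rewrite (keyB _ _ _ _ _ _ _ GA y Hy HyI l j Hl Hj HT').
    apply (x_bounds _ _ _ _ _ _ _ x Hx); auto.
Qed.

Theorem theorem9 (n m : nat) (Rr p : nat -> R -> R) (a k : nat -> R)
    (omega : nat -> nat -> R) :
  (1 <= n)%nat -> (1 <= m)%nat ->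
  game_assumption n m Rr p a k omega ->
  forall x y : nat -> nat -> R,
    is_GNE n m Rr p a k omega x ->
    (forall i, (i < n)%nat -> typeI n m Rr p a k omega x i) ->
    is_GNE n m Rr p a k omega y ->
    (forall i, (i < n)%nat -> typeI n m Rr p a k omega y i) ->
    forall i j, (i < n)%nat -> (j < m)%nat -> x i j = y i j.
Proof.
  intros _ _ GA x y Hx HxI Hy HyI i j Hi Hj.
  assert (C1 := compare _ _ _ _ _ _ _ x y j GA Hx HxI Hy HyI Hj).
  assert (C2 := compare _ _ _ _ _ _ _ y x j GA Hy HyI Hx HxI Hj).
  assert (HT : sumR n (fun l => x l j) = sumR n (fun l => y l j)) by lra.
  destruct (Rlt_dec (sumR n (fun l => x l j)) (omega i j)) as [Hl|Hl].
  - destruct (keyA _ _ _ _ _ _ _ GA x Hx HxI i j Hi Hj Hl) as [x0 [Tx0 Ex]].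
    destruct (keyA _ _ _ _ _ _ _ GA y Hy HyI i j Hi Hj ltac:(lra)) as [y0 [Ty0 Ey]].
    rewrite <- HT in Ey.
    pose proof GA as [_ [_ [_ [_ [Ha [_ Hom]]]]]].
    destruct (Hom i j Hi Hj) as [[om0 om1] Fom].
    assert (D := DF_neg _ _ _ _ _ _ _ GA i j Hi Hj (sumR n (fun l => x l j)) ltac:(lra)).
    set (DX := Derive (Feff Rr p a k i j) (sumR n (fun l => x l j))) in *.
    assert ((x i j - y i j) * DX = 0) by lra.
    apply Rmult_integral in H. destruct H; lra.
  - assert (H1 : omega i j <= sumR n (fun l => x l j)) by (apply Rnot_lt_le; exact Hl).
    assert (H2 : omega i j <= sumR n (fun l => y l j)) by lra.
    rewrite (keyB _ _ _ _ _ _ _ GA x Hx HxI i j Hi Hj H1).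
    rewrite (keyB _ _ _ _ _ _ _ GA y Hy HyI i j Hi Hj H2). reflexivity.
Qed.
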